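(* Let $c\ge2$, let $\Gamma$ be a $c$-uniform unoriented hypergraph with $E\neq\varnothing$ and no isolated vertices, with smallest normalized Laplacian eigenvalue $\lambda_1$, and let $q\in[0,c-1]$ be real. Then \[ \chi^{q\text{-t}}(\Gamma)\;\ge\;\frac{c-\lambda_1}{q+1-\lambda_1}. \] Moreover, the bound is sharp: whenever $q$ is an integer with $(q+1)\mid c$, there exists a $c$-uniform unoriented hypergraph attaining equality.
   Context: A hypergraph has finite vertex set $V$ and edge set $E\subseteq\mathcal P(V)$; it is $c$-uniform if $|e|=c$ for all $e$, and unoriented means all incidences have orientation $+1$. $\deg v=|\{e\in E: v\in e\}|\ge1$, $D=\mathrm{diag}(\deg v)$, adjacency $A_{v,v}=0$ and $A_{v,w}=-|\{e\in E: v,w\in e\}|$ for $v\ne w$, normalized Laplacian $L=\mathrm{Id}-D^{-1}A$ with eigenvalues $\lambda_1\le\dots\le\lambda_N$. For $q\in[0,c-1]$, a $k$-coloring $V\to\{1,\dots,k\}$ with color classes $V_1,\dots,V_k$ is $q$-tailored if for all $i$ and all $v\in V_i$, $\sum_{w\in V_i}|A_{v,w}|\le q\deg v$; $\chi^{q\text{-t}}(\Gamma)$ is the least $k$ admitting a $q$-tailored $k$-coloring. *)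

(* Defs.v *)
From HB Require Import structures.
From mathcomp Require Import all_boot all_order all_algebra.
Set Implicit Arguments. Unset Strict Implicit. Unset Printing Implicit Defensive.
Import Order.TTheory GRing.Theory Num.Theory.
Local Open Scope ring_scope.

(* A hypergraph on the finite vertex set V is given by its edge set
   E : {set {set V}}.  All incidences are +1 (unoriented). *)
Section Hypergraph.
Variable V : finType.
Variable E : {set {set V}}.

Definition uniform (c : nat) : Prop := forall e, e \in E -> #|e| = c.

Definition hdeg (v : V) : nat := #|[set e in E | v \in e]|.

Definition no_isolated : Prop := forall v : V, (1 <= hdeg v)%N.

Definition ncommon (v w : V) : nat := #|[set e in E | (v \in e) && (w \in e)]|.

Variable R : rcfType.

Definition hadj (v w : V) : R := if v == w then 0 else - (ncommon v w)%:R.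

Definition nlap : 'M[R]_#|V| :=
  \matrix_(i, j) ((i == j)%:R
                  - ((hdeg (enum_val i))%:R)^-1 * hadj (enum_val i) (enum_val j)).

Definition smallest_eigenvalue (l1 : R) : Prop :=
  eigenvalue nlap l1 /\ forall mu, eigenvalue nlap mu -> l1 <= mu.

(* q-tailored k-coloring (colors 'I_k correspond to {1,..,k}) *)
Definition tailored (q : R) (k : nat) (f : {ffun V -> 'I_k}) : bool :=
  [forall v, \sum_(w | f w == f v) `|hadj v w| <= q * (hdeg v)%:R].

Definition tailored_colorable (q : R) (k : nat) : bool :=
  [exists f : {ffun V -> 'I_k}, tailored q f].

Lemma tailored_colorable_card (q : R) : 0 <= q ->
  exists k, tailored_colorable q k.
Proof.
move=> q0; exists #|V|; apply/existsP; exists [ffun v => enum_rank v].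
apply/forallP => v.
rewrite (big_pred1 v); last first.
  by move=> w /=; rewrite !ffunE; apply/eqP/eqP => [/enum_rank_inj|->].
by rewrite /hadj eqxx normr0 mulr_ge0.
Qed.

Definition chi_t (q : R) (hq : 0 <= q) : nat :=
  ex_minn (tailored_colorable_card hq).

End Hypergraph.

(* Main.v *)
Require Import Defs.
From HB Require Import structures.
From mathcomp Require Import all_boot all_order all_algebra.
From mathcomp Require Import complex.
From mathcomp Require Import ring lra.
Import Order.TTheory GRing.Theory Num.Theory.
Local Open Scope ring_scope.
Local Open Scope sesquilinear_scope.
Lemma psd_of_eig (R : rcfType) n (S : 'M[R]_n) :
  S^T = S -> (forall r, eigenvalue S r -> 0 <= r) ->
  forall z : 'rV_n, 0 <= (z *m S *m z^T) 0 0.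
Proof.
move=> Ssym Sev z.
pose f := real_complex R.
pose Sc := map_mx f S.
have Sreal : Sc \is a realmx.
  by apply/mxOverP => i j; rewrite mxE; apply/complex_realP; exists (S i j).
have Sher : Sc \is hermsymmx.
  apply: realsym_hermsym => //; apply/is_hermitianmxP.
  by rewrite expr0 scale1r map_mx_id // /Sc map_trmx Ssym.
have /orthomx_spectralP Seq := hermitian_normalmx Sher.
set P := spectralmx Sc in Seq; set X := spectral_diag Sc in Seq.
have Pu : P \is unitarymx by apply: spectral_unitarymx.
rewrite invmx_unitary // in Seq.
have Xreal := hermitian_spectral_diag_real Sher; rewrite -/X in Xreal.
have Xge0 : forall k, 0 <= X 0 k.
  move=> k; have /complex_realP [r Xr] := mxOverP Xreal 0 k.
  rewrite Xr ler0c; apply: Sev.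
  rewrite eigenvalue_root_char -(fmorph_root f) map_char_poly.
  rewrite -eigenvalue_root_char -/Sc; apply/eigenvalueP.
  exists (row k P).
    rewrite Seq !mulmxA -row_mul (unitarymxP Pu) -!row_mul mul1mx mul_diag_mx.
    by apply/rowP => j; rewrite !mxE Xr.
  apply/eqP => h; have := unitarymxP Pu.
  move/(congr1 (row k)); rewrite row_mul h mul0mx => /rowP /(_ k).
  by rewrite !mxE eqxx /= => /eqP; rewrite eq_sym oner_eq0.
rewrite -ler0c.
have -> : ((z *m S *m z^T) 0 0)%:C%C = (map_mx f z *m Sc *m (map_mx f z) ^t* ) 0 0.
  have -> : (map_mx f z) ^t* = map_mx f z^T.
    apply/matrixP => i j; rewrite !mxE conj_Creal //.
    apply/complex_realP; exists (z j i); reflexivity.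
  by rewrite /Sc -!map_mxM [in RHS]mxE.
rewrite Seq !mulmxA.
set w := map_mx f z *m P ^t*.
have -> : (map_mx f z) *m P ^t* *m diag_mx X *m P *m (map_mx f z) ^t* =
          w *m diag_mx X *m w ^t*.
  by rewrite /w trmx_mul map_mxM trmxCK !mulmxA.
rewrite mul_mx_diag !mxE; apply: sumr_ge0 => k _; rewrite !mxE.
by rewrite mulrAC mulr_ge0 // mul_conjC_ge0.
Qed.

Lemma quadE (R : comNzRingType) n (y : 'rV[R]_n) (M : 'M_n) :
  (y *m M *m y^T) 0 0 = \sum_i \sum_j y 0 i * M i j * y 0 j.
Proof.
rewrite mxE; under eq_bigr do rewrite !mxE big_distrl /=.
by rewrite exchange_big.
Qed.

Lemma quad_diagE (R : comNzRingType) n (y : 'rV[R]_n) (d : 'rV_n) :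
  (y *m diag_mx d *m y^T) 0 0 = \sum_i d 0 i * y 0 i ^+ 2.
Proof.
rewrite mul_mx_diag mxE; apply: eq_bigr => i _; rewrite !mxE.
by rewrite mulrC mulrA expr2 mulrC.
Qed.

Lemma sum_delta (R : comNzRingType) (T : finType) (F : T -> R) (a : T) :
  \sum_x F x * (x == a)%:R = F a.
Proof.
rewrite (bigD1 a) //= eqxx mulr1 big1 ?addr0 //.
by move=> x /negbTE ->; rewrite mulr0.
Qed.

Lemma sum_delta1 (R : comNzRingType) (T : finType) (a : T) :
  \sum_x (x == a)%:R = 1 :> R.
Proof.
rewrite -[RHS](@sum_delta R T (fun _ => 1) a).
by apply: eq_bigr => x _; rewrite mul1r.
Qed.

Lemma color_sum (R : comNzRingType) k (x y : 'I_k) :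
  \sum_(a < k) (1 - k%:R * (x == a)%:R) * (1 - k%:R * (y == a)%:R) =
  k%:R ^+ 2 * (x == y)%:R - k%:R :> R.
Proof.
transitivity (\sum_(a < k) (1 - k%:R * (a == x)%:R - k%:R * (a == y)%:R
                 + k%:R ^+ 2 * ((x == a)%:R * (a == y)%:R)) : R).
  by apply: eq_bigr => a _; rewrite ![_ == a]eq_sym; ring.
rewrite !big_split /= !sumrN sumr_const card_ord -!mulr_sumr !sum_delta1 sum_delta.
ring.
Qed.

Section Part1.
Variables (R : rcfType) (V : finType) (E : {set {set V}}).

Definition NN (v w : V) : R := `|hadj E R v w|.
Definition dg (v : V) : R := (hdeg E v)%:R.

Lemma ncommon_sym v w : ncommon E v w = ncommon E w v.
Proof.
rewrite /ncommon; apply: eq_card => e; rewrite !inE; congr (_ && _); exact: andbC.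
Qed.

Lemma NNE v w : NN v w = if v == w then 0 else (ncommon E v w)%:R.
Proof.
by rewrite /NN /hadj; case: eqP => _; rewrite ?normr0 // normrN normr_nat.
Qed.

Lemma NN_sym v w : NN v w = NN w v.
Proof. by rewrite !NNE eq_sym ncommon_sym. Qed.

Lemma NN_ge0 v w : 0 <= NN v w.
Proof. exact: normr_ge0. Qed.

Lemma hadjE v w : hadj E R v w = - NN v w.
Proof. by rewrite NNE /hadj; case: eqP; rewrite ?oppr0. Qed.

Lemma nlapE i j : nlap E R i j =
  (i == j)%:R + (dg (enum_val i))^-1 * NN (enum_val i) (enum_val j).
Proof. by rewrite /nlap mxE hadjE mulrN opprK. Qed.


Lemma quad (l1 : R) : no_isolated E -> smallest_eigenvalue E l1 ->
  forall y : 'rV[R]_#|V|,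
  (l1 - 1) * (y *m diag_mx (\row_i dg (enum_val i)) *m y^T) 0 0 <=
  (y *m (\matrix_(i, j) NN (enum_val i) (enum_val j)) *m y^T) 0 0.
Proof.
move=> noiso [l1ev l1min] y.
set mu := l1 - 1.
have dpos : forall v, 0 < dg v by move=> v; rewrite /dg ltr0n; exact: noiso.
pose s (i : 'I_#|V|) := Num.sqrt (dg (enum_val i)).
have spos : forall i, 0 < s i by move=> i; rewrite sqrtr_gt0.
pose Ds := diag_mx (\row_i s i).
pose Di := diag_mx (\row_i (s i)^-1).
set Nm := \matrix_(i, j) NN (enum_val i) (enum_val j).
have hDD : Ds *m Di = 1%:M.
  apply/matrixP => i j; rewrite mul_diag_mx !mxE.
  case: (eqVneq i j) => [->|nij]; last by rewrite mulr0n mulr0.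
  by rewrite !mulr1n mulfV // gt_eqF.
have hDD' : Di *m Ds = 1%:M.
  apply/matrixP => i j; rewrite mul_diag_mx !mxE.
  case: (eqVneq i j) => [->|nij]; last by rewrite mulr0n mulr0.
  by rewrite !mulr1n mulVf // gt_eqF.
have hDs2 : Ds *m Ds = diag_mx (\row_i dg (enum_val i)).
  apply/matrixP => i j; rewrite mul_diag_mx !mxE.
  case: (eqVneq i j) => [->|nij]; last by rewrite !mulr0n mulr0.
  by rewrite !mulr1n -expr2 sqr_sqrtr // ltW.
have hnl : nlap E R = 1%:M + Di *m Di *m Nm.
  apply/matrixP => i j; rewrite nlapE -mulmxA.
  rewrite ?mul_diag_mx ?mxE; congr (_ + _).
  rewrite mulrA -invfM -expr2 sqr_sqrtr //; exact: ltW.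
have NmT : Nm^T = Nm by apply/matrixP => i j; rewrite !mxE NN_sym.
pose S := Di *m Nm *m Di - mu%:M.
have Ssym : S^T = S.
  by rewrite /S linearB /= tr_scalar_mx !trmx_mul !tr_diag_mx NmT mulmxA.
have Sev : forall r, eigenvalue S r -> 0 <= r.
  move=> r /eigenvalueP [v hv vnz].
  have hv' : v *m Di *m Nm = (r + mu) *: (v *m Ds).
    have : v *m Di *m Nm *m Di = (r + mu) *: v.
      move: hv; rewrite /S mulmxBr mul_mx_scalar !mulmxA => /eqP.
      by rewrite subr_eq => /eqP ->; rewrite -scalerDl.
    move/(congr1 (mulmx^~ Ds)); rewrite -(mulmxA _ Di Ds) hDD' mulmx1 => ->.
    by rewrite scalemxAl.
  have hl : eigenvalue (nlap E R) (r + l1).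
    apply/eigenvalueP; exists (v *m Ds).
      rewrite hnl mulmxDr mulmx1 !mulmxA -(mulmxA v Ds Di) hDD mulmx1 hv'.
      by rewrite -{1}(scale1r (v *m Ds)) -scalerDl; congr (_ *: _); rewrite /mu; ring.
    apply: contra vnz => /eqP h.
    by rewrite -(mulmx1 v) -hDD mulmxA h mul0mx.
  by have := l1min _ hl; rewrite lerDr.
have := @psd_of_eig R _ S Ssym Sev (y *m Ds).
rewrite trmx_mul tr_diag_mx /S mulmxBr mulmxBl mul_mx_scalar.
rewrite -scalemxAl !mulmxA -(mulmxA y Ds Di) hDD mulmx1 -(mulmxA _ Di Ds) hDD' mulmx1.
rewrite -(mulmxA y Ds Ds) hDs2 !mxE subr_ge0.
done.
Qed.


Lemma quadV (l1 : R) : no_isolated E -> smallest_eigenvalue E l1 ->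
  forall Y : V -> R,
  (l1 - 1) * \sum_v dg v * Y v ^+ 2 <= \sum_v \sum_w Y v * NN v w * Y w.
Proof.
move=> h1 h2 Y; have := @quad l1 h1 h2 (\row_i Y (enum_val i)).
rewrite quad_diagE quadE.
under [X in (_ * X <= _) -> _]eq_bigr => i _ do rewrite !mxE.
under [X in (_ <= X) -> _]eq_bigr => i _ do (under eq_bigr => j _ do rewrite !mxE).
rewrite (big_enum_val (A := predT) (fun v => dg v * Y v ^+ 2)).
rewrite (big_enum_val (A := predT) (fun v => \sum_w Y v * NN v w * Y w)).
under [X in _ -> _ <= X]eq_bigr => i _ do
  rewrite (big_enum_val (A := predT) (fun w => Y (enum_val i) * NN (enum_val i) w * Y w)).
by [].
Qed.


Lemma ncommon_diag v : ncommon E v v = hdeg E v.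
Proof. by rewrite /ncommon /hdeg; apply: eq_card => e; rewrite !inE andbb. Qed.

Lemma sum_ncommon c : uniform E c -> forall v,
  (\sum_w ncommon E v w = c * hdeg E v)%N.
Proof.
move=> hu v.
have ncE : forall w, ncommon E v w = \sum_(e in E) ((v \in e) && (w \in e) : nat).
  move=> w; rewrite /ncommon -sum1_card big_mkcond /= [RHS]big_mkcond /=.
  by apply: eq_bigr => e _; rewrite inE; case: (e \in E); case: (v \in e); case: (w \in e).
under eq_bigr do rewrite ncE.
rewrite exchange_big /= /hdeg -sum1_card big_distrr /= big_mkcond [RHS]big_mkcond /=.
apply: eq_bigr => e _; rewrite inE; case eE : (e \in E) => //=.
case ve : (v \in e) => /=; last by rewrite big1.
rewrite -(hu e eE) muln1 -sum1_card [RHS]big_mkcond /=.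
by apply: eq_bigr => w _; case: (w \in e).
Qed.

Lemma sum_NN c : uniform E c -> forall v, \sum_w NN v w = (c%:R - 1) * dg v.
Proof.
move=> hu v; have h := @sum_ncommon c hu v.
rewrite (bigD1 v) //= ncommon_diag in h.
rewrite (bigD1 v) //= NNE eqxx add0r.
rewrite (eq_bigr (fun w => (ncommon E v w)%:R)); last first.
  by move=> w /negbTE hw; rewrite NNE eq_sym hw.
rewrite -natr_sum.
have : ((hdeg E v + \sum_(i | i != v) ncommon E v i)%N%:R : R) = (c * hdeg E v)%N%:R.
  by rewrite h.
rewrite natrD natrM => H; apply: (addrI ((hdeg E v)%:R)); rewrite H /dg; ring.
Qed.



Lemma hoffman c (q l1 : R) k (f : {ffun V -> 'I_k}) :
  uniform E c -> (2 <= c)%N -> E != set0 -> no_isolated E ->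
  smallest_eigenvalue E l1 -> 0 <= q -> tailored E q f ->
  (c%:R - l1) / (q + 1 - l1) <= k%:R.
Proof.
move=> hu hc hE noiso hsm hq htail.
have [v0 _] : exists v0 : V, true.
  case/set0Pn: hE => e eE.
  have : (0 < #|e|)%N by rewrite (hu e eE); apply: leq_trans hc.
  by rewrite card_gt0 => /set0Pn [v _]; exists v.
have k0 : (0 < k)%N := leq_ltn_trans (leq0n _) (ltn_ord (f v0)).
have dpos : forall v, 0 < dg v by move=> v; rewrite /dg ltr0n; exact: noiso.
set W := \sum_v dg v.
have Wpos : 0 < W.
  rewrite /W (bigD1 v0) //=; apply: ltr_pwDl (dpos v0) _.
  by apply: sumr_ge0 => v _; exact: ltW.
set mu := l1 - 1.
have mule0 : mu <= 0.
  have := @quadV l1 noiso hsm (fun x => (x == v0)%:R).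
  rewrite (bigD1 v0) //= eqxx expr1n mulr1 big1 ?addr0; last first.
    by move=> v /negbTE ->; rewrite expr0n mulr0.
  under eq_bigr do rewrite sum_delta.
  under eq_bigr do rewrite mulrC.
  rewrite sum_delta NNE eqxx /mu => h.
  move: h (dpos v0); rewrite /mu; nra.
set K : R := k%:R.
pose Y (a : 'I_k) (x : V) : R := 1 - K * (f x == a)%:R.
have hsum : \sum_(a < k) (mu * \sum_v dg v * Y a v ^+ 2) <=
            \sum_(a < k) \sum_v \sum_w Y a v * NN v w * Y a w.
  by apply: ler_sum => a _; exact: (@quadV l1 noiso hsm (Y a)).
have L : \sum_(a < k) (mu * \sum_v dg v * Y a v ^+ 2) = mu * (K ^+ 2 - K) * W.
  rewrite -mulr_sumr exchange_big /= -mulrA; congr (_ * _).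
  rewrite /W mulr_sumr; apply: eq_bigr => v _.
  rewrite -mulr_sumr mulrC; congr (_ * _).
  under eq_bigr do rewrite expr2.
  by rewrite color_sum eqxx mulr1.
have Req : \sum_(a < k) \sum_v \sum_w Y a v * NN v w * Y a w =
    K ^+ 2 * \sum_v \sum_w NN v w * (f v == f w)%:R - K * ((c%:R - 1) * W).
  rewrite exchange_big /= /W mulr_sumr mulr_sumr [K * _]mulr_sumr -sumrB.
  apply: eq_bigr => v _; rewrite exchange_big /= -(@sum_NN c hu) mulr_sumr mulr_sumr -sumrB.
  apply: eq_bigr => w _.
  under eq_bigr do rewrite mulrAC.
  rewrite -mulr_suml color_sum; ring.
have Tb : \sum_v \sum_w NN v w * (f v == f w)%:R <= q * W.
  rewrite /W mulr_sumr; apply: ler_sum => v _.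
  have := forallP htail v.
  rewrite big_mkcond /= => H; apply: le_trans H.
  by apply: ler_sum => w _; rewrite eq_sym /NN; case: ifP => _; rewrite ?mulr1 ?mulr0.
have K1 : 1 <= K by rewrite /K ler1n.
have c2 : 2 <= c%:R :> R by rewrite (ler_nat R 2 c).
have H1 : mu * (K ^+ 2 - K) * W <= K ^+ 2 * (q * W) - K * ((c%:R - 1) * W).
  rewrite -L; apply: (le_trans hsum).
  by rewrite Req lerD2r ler_wpM2l // exprn_ge0 // ler0n.
have KW : 0 < K * W by rewrite mulr_gt0 // (lt_le_trans ltr01 K1).
have H2 : mu * (K - 1) - K * q + (c%:R - 1) <= 0.
  rewrite -(pmulr_rle0 _ KW).
  have -> : K * W * (mu * (K - 1) - K * q + (c%:R - 1)) =
    mu * (K ^+ 2 - K) * W - (K ^+ 2 * (q * W) - K * ((c%:R - 1) * W)) by ring.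
  by rewrite subr_le0.
have den : 0 < q + 1 - l1.
  move: H2 mule0 hq c2 K1; rewrite /mu; nra.
rewrite ler_pdivrMr //.
move: H2; rewrite /mu; nra.
Qed.


End Part1.

Lemma part1 (R : rcfType) (c : nat) (hc : (2 <= c)%N) :
  (forall (V : finType) (E : {set {set V}}) (l1 q : R) (hq0 : 0 <= q),
      uniform E c -> E != set0 -> no_isolated E ->
      smallest_eigenvalue E l1 ->
      q <= (c%:R - 1) ->
      (chi_t E hq0)%:R >= (c%:R - l1) / (q + 1 - l1)).
Proof.
move=> V E l1 q hq0 hu hE noiso hsm _.
rewrite /chi_t; case: ex_minnP => k /existsP [f hf] _.
exact: (@hoffman R V E c q l1 k f hu hc hE noiso hsm hq0 hf).
Qed.

Section Example.
Variables (R : rcfType) (c : nat).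
Hypothesis hc : (2 <= c)%N.

Definition exE : {set {set 'I_c}} := [set [set: 'I_c]].

Lemma ex_hdeg v : hdeg exE v = 1%N.
Proof.
rewrite /hdeg -[RHS](cards1 [set: 'I_c]); apply: eq_card => e.
by rewrite !inE; case: eqP => // ->; rewrite in_setT.
Qed.

Lemma ex_ncommon v w : ncommon exE v w = 1%N.
Proof.
rewrite /ncommon -[RHS](cards1 [set: 'I_c]); apply: eq_card => e.
by rewrite !inE; case: eqP => // ->; rewrite !in_setT.
Qed.

Lemma ex_nlap : nlap exE R = const_mx 1.
Proof.
apply/matrixP => i j; rewrite nlapE !mxE NNE /dg ex_hdeg ex_ncommon invr1 mul1r.
case: (eqVneq i j) => [->|nij]; first by rewrite eqxx addr0.
rewrite add0r (_ : (enum_val i == enum_val j) = false) //.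
by apply/negbTE; apply: contra nij => /eqP /enum_val_inj ->.
Qed.


Lemma ex_uniform : uniform exE c.
Proof. by move=> e; rewrite inE => /eqP ->; rewrite cardsT card_ord. Qed.

Lemma ex_nonempty : exE != set0.
Proof. by apply/set0Pn; exists setT; rewrite inE. Qed.

Lemma ex_noiso : no_isolated exE.
Proof. by move=> v; rewrite ex_hdeg. Qed.

Lemma ex_smallest : smallest_eigenvalue exE (0 : R).
Proof.
have h0 : (0 < #|'I_c|)%N by rewrite card_ord; apply: leq_trans hc.
have h1 : (1 < #|'I_c|)%N by rewrite card_ord.
pose i0 := Ordinal h0; pose i1 := Ordinal h1.
split.
  apply/eigenvalueP; exists (\row_j ((j == i0)%:R - (j == i1)%:R : R)).
    rewrite ex_nlap scale0r; apply/rowP => j; rewrite !mxE.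
    under eq_bigr do rewrite !mxE mulr1.
    by rewrite sumrB !sum_delta1 subrr.
  apply/eqP => /rowP /(_ i0); rewrite !mxE eqxx /=.
  by rewrite subr0 => /eqP; rewrite oner_eq0.
move=> a /eigenvalueP [v hv vnz]; rewrite ex_nlap in hv.
set s := \sum_i v 0 i.
have hj : forall j, s = a * v 0 j.
  move=> j; have := hv; move/rowP/(_ j); rewrite !mxE => <-.
  by apply: eq_bigr => i _; rewrite mxE mulr1.
rewrite leNgt; apply/negP => an.
have hs : s * (#|'I_c|%:R - a) = 0.
  have : \sum_(j < #|'I_c|) s = \sum_j a * v 0 j by apply: eq_bigr => j _; exact: hj j.
  rewrite sumr_const (card_ord #|'I_c|) -mulr_sumr -/s => e.
  by rewrite mulrBr mulr_natr e mulrC subrr.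
have s0 : s = 0.
  move/eqP: hs; rewrite mulf_eq0 => /orP [/eqP //|].
  by rewrite subr_eq0 => /eqP ha; move: an; rewrite -ha ltrn0.
move/negP: vnz; apply; apply/eqP/rowP => j; rewrite mxE.
have := hj j; rewrite s0 => /esym /eqP; rewrite mulf_eq0 => /orP [/eqP ha|/eqP //].
by move: an; rewrite ha ltxx.
Qed.


Lemma block_card (q : nat) (v : 'I_c) :
  (#|[set w : 'I_c | (w %/ q.+1 == v %/ q.+1)%N && (v != w)]| <= q)%N.
Proof.
pose g (w : 'I_c) : 'I_q.+1 := Ordinal (ltn_pmod w (ltn0Sn q)).
set A := [set w | _].
have inj : {in A &, injective g}.
  move=> w1 w2; rewrite !inE => /andP [/eqP h1 _] /andP [/eqP h2 _] /(congr1 val) /= hm.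
  by apply: val_inj; rewrite /= (divn_eq w1 q.+1) (divn_eq w2 q.+1) h1 h2 hm.
rewrite -(card_in_imset inj).
have : g @: A \subset [set~ g v].
  apply/subsetP => x /imsetP [w wA ->]; rewrite !inE.
  move: wA; rewrite inE => /andP [/eqP h1 hvw].
  apply: contra hvw => /eqP /(congr1 val) /= hm.
  by apply/eqP/val_inj; rewrite /= (divn_eq w q.+1) (divn_eq v q.+1) h1 hm.
by move/subset_leq_card; rewrite cardsC1 card_ord.
Qed.

Lemma ex_chi (q : nat) : (q.+1 %| c)%N -> chi_t exE (ler0n R q) = (c %/ q.+1)%N.
Proof.
move=> hqc; set m := (c %/ q.+1)%N.
have cE : c = (m * q.+1)%N by rewrite divnK.
apply/eqP; rewrite eqn_leq; apply/andP; split.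
  rewrite /chi_t; case: ex_minnP => k _ hmin; apply: hmin.
  have hlt : forall v : 'I_c, (v %/ q.+1 < m)%N.
    by move=> v; rewrite ltn_divLR // -cE.
  apply/existsP; exists [ffun v => Ordinal (hlt v)].
  apply/forallP => v; rewrite ex_hdeg mulr1.
  set A := [set w : 'I_c | (w %/ q.+1 == v %/ q.+1)%N && (v != w)].
  apply: (@le_trans _ _ (#|A|%:R)); last by rewrite ler_nat block_card.
  rewrite -sum1_card natr_sum big_mkcond [X in _ <= X]big_mkcond /=.
  apply: ler_sum => w _; rewrite !ffunE inE -val_eqE /= /hadj ex_ncommon.
  case: (w %/ q.+1 == v %/ q.+1)%N => //=.
  by case: (v =P w) => _; rewrite ?normr0 ?normrN ?normr1.
have hq1 : (q.+1 <= c)%N by apply: dvdn_leq => //; apply: leq_trans hc.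
have hqle : (q%:R : R) <= c%:R - 1.
  by rewrite lerBrDr -(natrD R q 1) addn1 ler_nat.
have := @part1 R c hc _ exE 0 q%:R (ler0n R q) ex_uniform ex_nonempty ex_noiso
  ex_smallest hqle.
rewrite !subr0 -(ler_nat R) {1}cE natrM -(natrD R q 1) addn1 mulfK //.
by rewrite pnatr_eq0.
Qed.

End Example.

Theorem mainTheorem11 (R : rcfType) (c : nat) (hc : (2 <= c)%N) :
  (forall (V : finType) (E : {set {set V}}) (l1 q : R) (hq0 : 0 <= q),
      uniform E c -> E != set0 -> no_isolated E ->
      smallest_eigenvalue E l1 ->
      q <= (c%:R - 1) ->
      (chi_t E hq0)%:R >= (c%:R - l1) / (q + 1 - l1))
  /\
  (forall (q : nat), (q.+1 %| c)%N ->
     exists (V : finType) (E : {set {set V}}) (l1 : R),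
       [/\ uniform E c, E != set0, no_isolated E,
           smallest_eigenvalue E l1 &
           (chi_t E (ler0n R q))%:R = (c%:R - l1) / (q%:R + 1 - l1)]).
Proof.
split; first exact: part1.
move=> q hqc; exists ('I_c : finType), (exE c), 0; split.
- exact: ex_uniform.
- exact: ex_nonempty.
- exact: ex_noiso.
- exact: ex_smallest.
rewrite ex_chi // !subr0.
have cE : c = ((c %/ q.+1) * q.+1)%N by rewrite divnK.
rewrite [in RHS]cE natrM -(natrD R q 1) addn1 mulfK //.
by rewrite pnatr_eq0.
Qed.
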